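(* Let $X$ be a finite nonempty set and put $p=2|X|-1$. Let $t,k\geq 0$ be integers and let $g\in\mathrm{FG}(X)$ have reduced length $t$. Then the number of elements $(T,g)\in \mathrm{FIM}(X)$ (with this fixed $g$) having exactly $k$ branch edges equals $R_{p,q}(k)$, where $q=2p+(t-1)(p-1)$.
   Context: $\mathrm{FG}(X)$ is the free group on $X$. $\Gamma_X$ is the Cayley graph of $\mathrm{FG}(X)$ with respect to $X$: its vertices are the elements of $\mathrm{FG}(X)$, with an edge from $h$ to $hx$ for each $h$ and each $x\in X$. Elements of the free inverse monoid $\mathrm{FIM}(X)$ are identified (Munn's model) with pairs $(T,g)$, where $T$ is a finite connected subgraph of $\Gamma_X$ containing the vertex $1$ and $g$ is a vertex of $T$. The trunk of $(T,g)$ is the unique geodesic in $T$ from $1$ to $g$. Branch edges are the edges of $T$ not on the trunk. The Fuss–Catalan number is $R_{p,q}(k)=\frac{q}{kp+q}\binom{kp+q}{k}$. *)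

(* Defs.v *)
From HB Require Import structures.
From mathcomp Require Import all_boot all_order all_algebra.
From mathcomp Require Import finmap.
Set Implicit Arguments. Unset Strict Implicit. Unset Printing Implicit Defensive.
Import Order.TTheory GRing.Theory Num.Theory.
Local Open Scope fset_scope.

(* Words over X^{+-1}: a letter (x, false) is x, (x, true) is x^{-1}. *)
Definition letter (X : finType) := (X * bool)%type.

(* Freely reduced words: no adjacent x x^{-1} or x^{-1} x.
   Elements of FG(X) are identified with reduced words; 1 = [::]. *)
Definition reduced (X : finType) (w : seq (letter X)) : bool :=
  ~~ has (fun ab : letter X * letter X =>
            (ab.1.1 == ab.2.1) && (ab.1.2 != ab.2.2)) (zip w (behead w)).

Definition rmul (X : finType) (w : seq (letter X)) (l : letter X) : seq (letter X) :=
  match rev w with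
  | l' :: r => if (l'.1 == l.1) && (l'.2 != l.2) then rev r else rcons w l
  | [::] => [:: l]
  end.

Definition mulx (X : finType) (h : seq (letter X)) (x : X) := rmul h (x, false).

(* Edges of the Cayley graph Gamma_X: the edge from h to h x is encoded (h, x). *)
Definition cedge (X : finType) := (seq (letter X) * X)%type.

Definition subgraph (X : finType) :=
  ({fset seq (letter X)} * {fset cedge X})%type.

Definition joins (X : finType) (e : cedge X) (u v : seq (letter X)) : bool :=
  ((u == e.1) && (v == mulx e.1 e.2)) || ((v == e.1) && (u == mulx e.1 e.2)).

Definition adj (X : finType) (E : {fset cedge X}) : rel (seq (letter X)) :=
  fun u v => has (fun e => joins e u v) E.

(* A walk in E from 1 to v: vertex sequence 1 :: p. *)
Definition walk (X : finType) (E : {fset cedge X}) (v : seq (letter X))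
  (p : seq (seq (letter X))) : bool :=
  path (adj E) [::] p && (last [::] p == v).

Definition is_fin_conn_subgraph (X : finType) (T : subgraph X) : Prop :=
  [/\ (forall v, v \in T.1 -> reduced v),
      (forall e, e \in T.2 -> (e.1 \in T.1) && (mulx e.1 e.2 \in T.1)),
      [::] \in T.1
    & (forall v, v \in T.1 -> exists p, walk T.2 v p)].

(* (T, g) is an element of FIM(X) (Munn's model). *)
Definition munn_elt (X : finType) (T : subgraph X) (g : seq (letter X)) : Prop :=
  is_fin_conn_subgraph T /\ g \in T.1.

Definition geodesic (X : finType) (T : subgraph X) (g : seq (letter X))
  (p : seq (seq (letter X))) : Prop :=
  walk T.2 g p /\ (forall p', walk T.2 g p' -> size p <= size p').

Definition on_walk (X : finType) (e : cedge X) (p : seq (seq (letter X))) : bool :=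
  has (fun uv => joins e uv.1 uv.2) (zip ([::] :: p) p).

Definition trunk_edge (X : finType) (T : subgraph X) (g : seq (letter X))
  (e : cedge X) : Prop :=
  exists p, geodesic T g p /\ on_walk e p.

Definition n_branch_edges (X : finType) (T : subgraph X) (g : seq (letter X))
  (k : nat) : Prop :=
  exists B : {fset cedge X},
    #|` B| = k /\ (forall e, e \in B <-> (e \in T.2 /\ ~ trunk_edge T g e)).

Definition fuss_catalan (p q k : nat) : rat :=
  (q%:R / (k * p + q)%:R * 'C(k * p + q, k)%:R)%R.

(* Main.v *)
Require Import Defs.
From HB Require Import structures.
From mathcomp Require Import all_boot all_order all_algebra.
From mathcomp Require Import finmap.
Import Order.TTheory GRing.Theory Num.Theory.
Set Implicit Arguments. Unset Strict Implicit. Unset Printing Implicit Defensive.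
Local Open Scope fset_scope.

Definition canc (X : finType) (a b : letter X) := (a.1 == b.1) && (a.2 != b.2).

Lemma reduced_cons2 X (a b : letter X) s :
  reduced [:: a, b & s] = ~~ canc a b && reduced (b :: s).
Proof. by rewrite /reduced /= negb_or. Qed.

Lemma reduced1 X (a : letter X) : reduced [:: a].
Proof. by []. Qed.

Lemma reduced_rcons2_aux X (r : seq (letter X)) a b c :
  reduced (c :: rcons (rcons r a) b) = reduced (c :: rcons r a) && ~~ canc a b.
Proof.
elim: r c => [|d r IH] c /=.
  rewrite !reduced_cons2.
  by case: (canc c a); case: (canc a b).
by rewrite !reduced_cons2 IH andbA.
Qed.

Lemma reduced_rcons2 X (r : seq (letter X)) a b :
  reduced (rcons (rcons r a) b) = reduced (rcons r a) && ~~ canc a b.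
Proof.
case: r => [|c r]; last exact: reduced_rcons2_aux.
by rewrite /= reduced_cons2 andbT.
Qed.

Lemma reduced_rconsW X (w : seq (letter X)) b : reduced (rcons w b) -> reduced w.
Proof. by case/lastP: w => [|r a] //; rewrite reduced_rcons2 => /andP[]. Qed.

Lemma reduced_catl X (s1 s2 : seq (letter X)) : reduced (s1 ++ s2) -> reduced s1.
Proof.
elim/last_ind: s2 => [|s2 x IH]; first by rewrite cats0.
by rewrite -rcons_cat => /reduced_rconsW.
Qed.

Lemma reduced_take X (w : seq (letter X)) i : reduced w -> reduced (take i w).
Proof. by rewrite -{1}(cat_take_drop i w) => /reduced_catl. Qed.

Lemma rmul_rcons X (r : seq (letter X)) a b :
  rmul (rcons r a) b = if canc a b then r else rcons (rcons r a) b.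
Proof. by rewrite /rmul rev_rcons revK. Qed.

Lemma rmul_nil X (b : letter X) : rmul [::] b = [:: b].
Proof. by []. Qed.

Definition parent (X : finType) (w : seq (letter X)) := take (size w).-1 w.

Lemma parent_rcons X (r : seq (letter X)) a : parent (rcons r a) = r.
Proof. by rewrite /parent size_rcons /= -cats1 take_size_cat. Qed.

Lemma parent_nil X : parent ([::] : seq (letter X)) = [::].
Proof. by []. Qed.

Lemma prefix_rconsE (T : eqType) (v w : seq T) l :
  prefix v (rcons w l) = prefix v w || (v == rcons w l).
Proof.
elim: w v => [|a w IH] [|b v] //=.
by rewrite IH eqseq_cons andb_orr.
Qed.

Lemma rmulP X (w : seq (letter X)) l :
  rmul w l = rcons w l \/ (w != [::] /\ rmul w l = parent w).
Proof.
case/lastP: w => [|r a]; first by left.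
rewrite rmul_rcons parent_rcons; case: (canc a l); last by left.
by right; split => //; case: r.
Qed.

Lemma size_rmul X (w : seq (letter X)) l :
  (size (rmul w l) = (size w).+1) \/ (size (rmul w l)).+1 = size w.
Proof.
case: (rmulP w l) => [->|[ne ->]]; first by left; rewrite size_rcons.
right; case/lastP: w ne => [|r a] //; by rewrite parent_rcons size_rcons.
Qed.

Definition word (X : finType) := seq (letter X).

Definition children (X : finType) (u : seq (letter X)) : seq (seq (letter X)) :=
  [seq rcons u l | l <- enum {: letter X} & reduced (rcons u l)].

Lemma mem_children X (u w : seq (letter X)) :
  (w \in children u) = [&& w != [::], reduced w & parent w == u].
Proof.
apply/mapP/idP => [[l]|].
  rewrite mem_filter => /andP[Hr _] ->.
  by rewrite Hr parent_rcons eqxx; case: u {Hr}.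
case/lastP: w => [|r a] //; rewrite parent_rcons => /and3P[_ Hr /eqP Hu]; subst u.
by exists a => //; rewrite mem_filter Hr mem_enum.
Qed.

Fixpoint enumF (X : finType) (k : nat) (L : seq (seq (letter X)))
  : seq (seq (seq (letter X))) :=
  match k with
  | 0 => [:: [::]]
  | k'.+1 => (fix inner (L : seq (seq (letter X))) :=
             match L with
             | [::] => [::]
             | u :: rest => inner rest ++ map (cons u) (enumF k' (children u ++ rest))
             end) L
  end.

Lemma enumF0 X (L : seq (seq (letter X))) : enumF 0 L = [:: [::]].
Proof. by []. Qed.
Lemma enumF_nil X k : enumF k.+1 ([::] : seq (seq (letter X))) = [::].
Proof. by []. Qed.
Lemma enumF_cons X k (u : seq (letter X)) rest :
  enumF k.+1 (u :: rest) = enumF k.+1 rest ++ map (cons u) (enumF k (children u ++ rest)).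
Proof. by []. Qed.

Definition toF (X : finType) (s : seq (seq (letter X))) : {fset seq (letter X)} :=
  [fset x in s].

Lemma mem_toF X (s : seq (seq (letter X))) w : (w \in toF s) = (w \in s).
Proof. by rewrite in_fset. Qed.

Definition forest (X : finType) (L : seq (seq (letter X))) (S : {fset seq (letter X)}) : Prop :=
  forall w, w \in S -> [/\ w != [::], reduced w & (w \in L) || (parent w \in S)].

Lemma forest_pref X (L : seq (seq (letter X))) S w :
  forest L S -> w \in S -> exists2 v, v \in L & prefix v w.
Proof.
move=> FS Hw.
suff H : forall n w, size w < n -> w \in S -> exists2 v, v \in L & prefix v w.
  exact: H _ _ (ltnSn _) Hw.
elim=> // n IH {}w Hsz {}Hw.
have [ne _ /orP[HL|HP]] := FS w Hw; first by exists w => //; exact: prefix_refl.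
have h : size (parent w) < size w.
  move: ne; clear.
  by case/lastP: w => // r a _; rewrite parent_rcons size_rcons.
have Hs : size (parent w) < n by apply: leq_trans h Hsz.
have [v Hv Hp] := IH _ Hs HP; exists v => //.
exact: (prefix_trans Hp (prefix_take _ _)).
Qed.

Lemma enumF_complete X k (L : seq (seq (letter X))) (S : {fset seq (letter X)}) :
  forest L S -> #|`S| = k -> exists2 s, s \in enumF k L & toF s = S.
Proof.
elim: k L S => [|k IHk] L S FS.
  move/cardfs0_eq => ->; exists [::]; first by rewrite enumF0 mem_seq1.
  by apply/fsetP => x; rewrite mem_toF.
elim: L S FS => [|u rest IHL] S FS cS.
  have : 0 < #|`S| by rewrite cS.
  rewrite cardfs_gt0 => /fset0Pn [w Hw].
  by have [v] := forest_pref FS Hw.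
rewrite enumF_cons.
have [uS|uS] := boolP (u \in S).
  have FS' : forest (children u ++ rest) (S `\ u).
    move=> w; rewrite in_fsetD1 => /andP[wu wS].
    have [ne red /orP[HL|HP]] := FS w wS; split => //.
      by rewrite mem_cat; move: HL; rewrite inE (negPf wu) /= => ->; rewrite orbT.
    have [/eqP pu|pu] := boolP (parent w == u).
      by rewrite mem_cat mem_children ne red pu eqxx.
    by rewrite in_fsetD1 pu HP orbT.
  have cS' : #|`S `\ u| = k.
    by move: cS; rewrite (cardfsD1 u) uS add1n => -[].
  have [s' Hs' Es'] := IHk _ _ FS' cS'.
  exists (u :: s'); first by rewrite mem_cat map_f ?orbT.
  apply/fsetP => x; rewrite mem_toF inE -mem_toF Es' in_fsetD1.
  by case: (eqVneq x u) => [->|] //=.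
have FS' : forest rest S.
  move=> w wS; have [ne red /orP[HL|HP]] := FS w wS; split => //; last by rewrite HP orbT.
  move: HL; rewrite inE => /orP[/eqP wu|->//]; by rewrite -wu wS in uS.
have [s Hs Es] := IHL S FS' cS.
by exists s => //; rewrite mem_cat Hs.
Qed.

Definition Inv1 (X : finType) (L : seq (seq (letter X))) :=
  forall u, u \in L -> (u != [::]) && reduced u.

Lemma forest_sub X (L L' : seq (seq (letter X))) S :
  {subset L <= L'} -> forest L S -> forest L' S.
Proof.
move=> sub FS w wS; have [ne red /orP[HL|HP]] := FS w wS; split => //.
  by rewrite sub. by rewrite HP orbT.
Qed.

Lemma Inv1_children X (u : seq (letter X)) rest :
  Inv1 rest -> Inv1 (children u ++ rest).
Proof.
move=> I w; rewrite mem_cat mem_children => /orP[/and3P[-> -> _]//|]; exact: I.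
Qed.

Lemma enumF_sound X k (L : seq (seq (letter X))) s :
  Inv1 L -> s \in enumF k L -> forest L (toF s) /\ size s = k.
Proof.
elim: k L s => [|k IHk] L s IL.
  rewrite enumF0 mem_seq1 => /eqP ->; split => // w; by rewrite mem_toF.
elim: L s IL => [|u rest IHL] s IL //.
have Irest : Inv1 rest by move=> v Hv; apply: IL; rewrite inE Hv orbT.
rewrite enumF_cons mem_cat => /orP[Hs|/mapP[s' Hs' ->]].
  have [F Sz] := IHL s Irest Hs; split => //.
  by apply: forest_sub F => v Hv; rewrite inE Hv orbT.
have [F Sz] := IHk _ s' (@Inv1_children _ u _ Irest) Hs'; split; last by rewrite /= Sz.
move=> w; rewrite mem_toF inE => /orP[/eqP ->|ws'].
  have /andP[ne red] := IL u (mem_head _ _).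
  by rewrite ne red mem_head.
rewrite -mem_toF in ws'.
have [ne red /orP[HL|HP]] := F w ws'; split => //.
  move: HL; rewrite mem_cat mem_children => /orP[/and3P[_ _ /eqP ->]|HL].
    by rewrite mem_toF mem_head orbT.
  by rewrite inE HL orbT.
rewrite mem_toF inE; rewrite mem_toF in HP; by rewrite inE HP !orbT.
Qed.

Lemma enumF_pref X k (L : seq (seq (letter X))) s w :
  s \in enumF k L -> w \in s -> exists2 v, v \in L & prefix v w.
Proof.
elim: k L s => [|k IHk] L s.
  by rewrite enumF0 mem_seq1 => /eqP ->.
elim: L s => [|u rest IHL] s //.
rewrite enumF_cons mem_cat => /orP[Hs ws|/mapP[s' Hs' ->]].
  by have [v Hv Hp] := IHL s Hs ws; exists v => //; rewrite inE Hv orbT.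
rewrite inE => /orP[/eqP ->|ws']; first by exists u; rewrite ?mem_head ?prefix_refl.
have [v] := IHk _ _ Hs' ws'; rewrite mem_cat => /orP[Hv Hp|Hv Hp].
  exists u; first exact: mem_head.
  move: Hv; rewrite mem_children => /and3P[_ _ /eqP <-].
  exact: (prefix_trans (prefix_take _ _) Hp).
by exists v => //; rewrite inE Hv orbT.
Qed.

Lemma mem_cons_r (T : eqType) (x y : T) s : x \in s -> x \in y :: s.
Proof. by move=> H; rewrite inE H orbT. Qed.
Arguments mem_cons_r {T x} y {s}.

Definition Inv2 (X : finType) (L : seq (seq (letter X))) :=
  uniq L /\ (forall u v, u \in L -> v \in L -> prefix u v -> u = v).

Lemma child_prefix X (u c v : seq (letter X)) :
  c \in children u -> prefix v c -> prefix v u || (v == c).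
Proof.
by case/mapP => l _ ->; rewrite prefix_rconsE.
Qed.

Lemma prefix_child X (u c : seq (letter X)) : c \in children u -> prefix u c.
Proof. by case/mapP => l _ ->; apply: prefix_rcons. Qed.

Lemma noprefix_child X (u c : seq (letter X)) : c \in children u -> ~~ prefix c u.
Proof.
case/mapP => l _ ->; apply/negP => /size_prefix; by rewrite size_rcons ltnn.
Qed.

Lemma Inv2_rest X (u : seq (letter X)) rest : Inv2 (u :: rest) -> Inv2 rest.
Proof.
case=> /andP[_ U] A; split => // a b Ha Hb; apply: A; by rewrite inE ?Ha ?Hb orbT.
Qed.

Lemma rest_noprefix X (u : seq (letter X)) rest v :
  Inv2 (u :: rest) -> v \in rest -> ~~ prefix v u.
Proof.
case=> /andP[nu _] A Hv; apply/negP => Hp.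
have E := A v u (mem_cons_r u Hv) (mem_head _ _) Hp.
by rewrite -E Hv in nu.
Qed.

Lemma rest_nochild X (u : seq (letter X)) rest v :
  Inv2 (u :: rest) -> v \in rest -> v \notin children u.
Proof.
case=> /andP[nu _] A Hv; apply/negP => /prefix_child Hp.
have E := A u v (mem_head _ _) (mem_cons_r u Hv) Hp.
by rewrite E Hv in nu.
Qed.

Lemma Inv2_children X (u : seq (letter X)) rest :
  Inv2 (u :: rest) -> Inv2 (children u ++ rest).
Proof.
move=> I2; have I2r := Inv2_rest I2.
have nc := @rest_nochild _ _ _ ^~ I2.
split.
  rewrite cat_uniq; apply/and3P; split; last by case: I2r.
    rewrite /children map_inj_uniq; last exact: rcons_injr.
    by rewrite filter_uniq // enum_uniq.
  apply/hasPn => v Hv; exact: nc.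
move=> a b; rewrite !mem_cat => /orP[Ha|Ha] /orP[Hb|Hb] Hp.
- have /orP[H|/eqP //] := child_prefix Hb Hp.
  by rewrite (negPf (noprefix_child Ha)) in H.
- have Hub := prefix_trans (prefix_child Ha) Hp.
  case: I2 => /andP[nu _] A.
  have E := A u b (mem_head _ _) (mem_cons_r u Hb) Hub.
  by rewrite E Hb in nu.
- have /orP[H|/eqP E] := child_prefix Hb Hp.
    by rewrite (negPf (rest_noprefix I2 Ha)) in H.
  by rewrite E in Ha; rewrite (negPf (nc _ Ha)) in Hb.
- by case: I2r => _ A; apply: A.
Qed.

Lemma enumF_notin X k (L : seq (seq (letter X))) s u :
  (forall v, v \in L -> ~~ prefix v u) -> s \in enumF k L -> u \notin s.
Proof.
move=> H Hs; apply/negP => us.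
have [v Hv Hp] := enumF_pref Hs us.
by rewrite (negPf (H v Hv)) in Hp.
Qed.

Lemma cons_noprefix X (u : seq (letter X)) rest v :
  Inv2 (u :: rest) -> v \in children u ++ rest -> ~~ prefix v u.
Proof.
move=> I2; rewrite mem_cat => /orP[H|H]; first exact: noprefix_child.
exact: rest_noprefix I2 H.
Qed.

Lemma enumF_uniq X k (L : seq (seq (letter X))) s :
  Inv2 L -> s \in enumF k L -> uniq s.
Proof.
elim: k L s => [|k IHk] L s.
  by move=> _; rewrite enumF0 mem_seq1 => /eqP ->.
elim: L s => [|u rest IHL] s // I2.
rewrite enumF_cons mem_cat => /orP[Hs|/mapP[s' Hs' ->]].
  exact: IHL _ (Inv2_rest I2) Hs.
rewrite /= (IHk _ _ (Inv2_children I2) Hs') andbT.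
apply: enumF_notin Hs' => v; exact: cons_noprefix.
Qed.

Lemma enumF_uniqF X k (L : seq (seq (letter X))) :
  Inv2 L -> uniq (map (@toF X) (enumF k L)).
Proof.
elim: k L => [|k IHk] L; first by [].
elim: L => [|u rest IHL] // I2.
rewrite enumF_cons map_cat cat_uniq (IHL (Inv2_rest I2)) /=.
have nin1 : forall S, S \in map (@toF X) (enumF k.+1 rest) -> u \notin S.
  move=> S /mapP[s Hs ->]; rewrite mem_toF.
  apply: enumF_notin Hs => v Hv; exact: rest_noprefix I2 Hv.
have nin2 : forall S, S \in map (@toF X) (enumF k (children u ++ rest)) -> u \notin S.
  move=> S /mapP[s Hs ->]; rewrite mem_toF.
  apply: enumF_notin Hs => v Hv; exact: cons_noprefix I2 Hv.
have E : map (@toF X) (map (cons u) (enumF k (children u ++ rest))) =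
         map (fsetU [fset u]) (map (@toF X) (enumF k (children u ++ rest))).
  rewrite -!map_comp; apply: eq_map => s /=.
  by apply/fsetP => x; rewrite /= mem_toF in_fsetU in_fset1 inE mem_toF.
rewrite E; apply/andP; split.
  apply/hasPn => S /mapP[S' HS' ->]; apply/negP => /nin1; by rewrite fsetU11.
rewrite map_inj_in_uniq; first exact: IHk (Inv2_children I2).
move=> A B HA HB /= EAB.
by rewrite -(fsetU1K (nin2 _ HA)) EAB fsetU1K // nin2.
Qed.

Fixpoint Fn (P k q : nat) {struct k} : nat :=
  match k with
  | 0 => 1
  | k'.+1 => (fix inner q := match q with
                             | 0 => 0
                             | q'.+1 => (inner q' + Fn P k' (P + q'))%N
                             end) q
  end.

Lemma Fn0 P q : Fn P 0 q = 1. Proof. by []. Qed.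
Lemma Fn_nil P k : Fn P k.+1 0 = 0. Proof. by []. Qed.
Lemma Fn_cons P k q : Fn P k.+1 q.+1 = (Fn P k.+1 q + Fn P k (P + q))%N. Proof. by []. Qed.

Lemma size_children X (u : seq (letter X)) :
  u != [::] -> reduced u -> size (children u) = #|{: letter X}|.-1.
Proof.
case/lastP: u => [|r a] // _ Hr.
rewrite size_map size_filter.
have -> : count (fun l => reduced (rcons (rcons r a) l)) (enum {: letter X}) =
          count (predC1 (a.1, ~~ a.2)) (enum {: letter X}).
  apply: eq_count => [[x b]] /=.
  rewrite reduced_rcons2 Hr /= /canc /= xpair_eqE eq_sym.
  by case: (x == a.1); case: b; case: (a.2).
have := count_predC (pred1 (a.1, ~~ a.2)) (enum {: letter X}).
rewrite -cardT count_uniq_mem ?enum_uniq // mem_enum /= add1n => <-.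
by [].
Qed.

Lemma size_enumF X k (L : seq (seq (letter X))) :
  Inv1 L -> size (enumF k L) = Fn #|{: letter X}|.-1 k (size L).
Proof.
elim: k L => [|k IHk] L //.
elim: L => [|u rest IHL] // I1.
have Ir : Inv1 rest by move=> v Hv; apply: I1; rewrite inE Hv orbT.
rewrite enumF_cons size_cat size_map IHL // IHk; last exact: Inv1_children.
have /andP[ne red] := I1 u (mem_head _ _).
by rewrite size_cat size_children.
Qed.

From mathcomp Require Import ring zify.

Section FussSec.
Local Open Scope ring_scope.

Lemma fuss_step (P k q : nat) : (0 < P)%N ->
  fuss_catalan P q.+1 k.+1 = (fuss_catalan P q k.+1 + fuss_catalan P (P + q) k)%R.
Proof.
move=> P0.
rewrite /fuss_catalan.
set n := (k.+1 * P + q)%N.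
have e1 : (k.+1 * P + q.+1)%N = n.+1 by rewrite /n addnS.
have e2 : (k * P + (P + q))%N = n by rewrite /n mulSn addnA [(k * P + P)%N]addnC.
rewrite e1 e2.
have kn : (k <= n)%N.
  rewrite /n mulSn; move: P0; clear; nia.
have h1 : ('C(n.+1, k.+1)%:R : rat) = (n.+1)%:R / (k.+1)%:R * ('C(n,k))%:R.
  have := mul_bin_diag n.+1 k; rewrite /= => /(congr1 (fun m => (m%:R : rat))).
  rewrite !natrM => H.
  have k1 : ((k.+1)%:R : rat) != 0 by rewrite pnatr_eq0.
  have k1' : (1 + k%:R : rat) != 0.
    have h : (((1 + k)%N)%:R : rat) != 0 by rewrite pnatr_eq0.
    by rewrite natrD in h.
  apply: (mulfI k1); rewrite -H; field; exact: k1'.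
have h2 : ('C(n, k.+1)%:R : rat) = (n%:R - k%:R) / (k.+1)%:R * ('C(n,k))%:R.
  have := mul_bin_left n k; move/(congr1 (fun m => (m%:R : rat))).
  rewrite !natrM natrB // => H.
  have k1 : ((k.+1)%:R : rat) != 0 by rewrite pnatr_eq0.
  have k1' : (1 + k%:R : rat) != 0.
    have h : (((1 + k)%N)%:R : rat) != 0 by rewrite pnatr_eq0.
    by rewrite natrD in h.
  apply: (mulfI k1); rewrite H; field; exact: k1'.
have hn : (n%:R : rat) = (k%:R + 1) * P%:R + q%:R.
  by rewrite /n natrD natrM -addn1 natrD.
have n0 : (n%:R : rat) != 0.
  rewrite pnatr_eq0 /n; apply/negP => /eqP H.
  have : (0 < k.+1 * P)%N by rewrite muln_gt0 P0.
  by move: H; case: (k.+1 * P)%N.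
rewrite h1 h2.
have np : (n%:R + 1 : rat) != 0 by rewrite natr1 pnatr_eq0.
have kp : (k%:R + 1 : rat) != 0 by rewrite natr1 pnatr_eq0.
rewrite -!natr1 natrD.
move: hn n0 np; clearbody n => hn n0 np.
move: (n%:R : rat) hn n0 np => N -> n0 np.
move: ('C(n, k)%:R : rat) => c.
field.
by rewrite n0 kp.
Qed.
End FussSec.

Lemma Fn_fuss (P k q : nat) : (0 < P)%N -> (0 < q)%N || (0 < k)%N ->
  ((Fn P k q)%:R : rat) = fuss_catalan P q k.
Proof.
move=> P0; elim: k q => [|k IHk] q.
  rewrite orbF => q0; rewrite Fn0 /fuss_catalan mul0n add0n bin0.
  by rewrite GRing.mulfV ?GRing.mulr1 // pnatr_eq0 -lt0n.
move=> _; elim: q => [|q IHq].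
  by rewrite Fn_nil /fuss_catalan GRing.mul0r GRing.mul0r.
rewrite Fn_cons natrD IHq // IHk; last by rewrite addn_gt0 P0.
by rewrite fuss_step.
Qed.

Definition edge (X : finType) (x0 : X) (w : seq (letter X)) : cedge X :=
  match rev w with
  | l :: _ => if l.2 then (w, l.1) else (parent w, l.1)
  | [::] => ([::], x0)
  end.

Lemma edge_rcons X x0 (r : seq (letter X)) a :
  edge x0 (rcons r a) = if a.2 then (rcons r a, a.1) else (r, a.1).
Proof. by rewrite /edge rev_rcons parent_rcons. Qed.

Lemma canc_false X (a : letter X) x : canc a (x, false) = (a.1 == x) && a.2.
Proof. by rewrite /canc /=; case: a.2. Qed.

Lemma edge_ends X x0 (r : seq (letter X)) a : reduced (rcons r a) ->
  let e := edge x0 (rcons r a) in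
  (e.1 = r /\ mulx e.1 e.2 = rcons r a) \/ (e.1 = rcons r a /\ mulx e.1 e.2 = r).
Proof.
move=> Hr /=; rewrite edge_rcons /mulx.
case: a Hr => x b Hr /=.
case: b Hr => Hr /=.
  by right; split => //; rewrite rmul_rcons canc_false /= eqxx.
left; split => //; case/lastP: r Hr => [|r c] //= Hr.
rewrite rmul_rcons; move: Hr; rewrite reduced_rcons2 => /andP[_].
by rewrite /canc /= => /negPf ->.
Qed.

Lemma joins_edge X x0 (r : seq (letter X)) a : reduced (rcons r a) ->
  joins (edge x0 (rcons r a)) r (rcons r a).
Proof.
move=> /(edge_ends x0) [[E1 E2]|[E1 E2]]; by rewrite /joins E2 E1 !eqxx ?orbT.
Qed.

Lemma joins_ends X (e : cedge X) u v : joins e u v ->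
  (u = e.1 \/ u = mulx e.1 e.2) /\ (v = e.1 \/ v = mulx e.1 e.2).
Proof.
by case/orP => /andP[/eqP -> /eqP ->]; split; auto.
Qed.

Lemma joins_edgeE X x0 (e : cedge X) (r : seq (letter X)) a :
  joins e r (rcons r a) -> e = edge x0 (rcons r a).
Proof.
case: e => h x; rewrite /joins /= edge_rcons /mulx.
case/orP => /andP[/eqP Eh /eqP E].
  subst h; case: (rmulP r (x, false)) E => [->|[_ ->]].
    by move/rcons_inj; case=> ->.
  move/(congr1 size); case/lastP: r => [|r c] //.
  rewrite parent_rcons !size_rcons => H; exfalso; lia.
subst h; move: E; rewrite rmul_rcons.
case: ifP => [|_]; last first.
  by move/(congr1 size); rewrite !size_rcons => H; exfalso; lia.
case: a => y b; rewrite canc_false /= => /andP[/eqP -> ->] _ //.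
Qed.

Lemma edge_inj X x0 (w w' : seq (letter X)) :
  w != [::] -> w' != [::] -> reduced w -> reduced w' ->
  edge x0 w = edge x0 w' -> w = w'.
Proof.
case/lastP: w => [|r a] // _; case/lastP: w' => [|r' a'] // _ Hw Hw'.
rewrite !edge_rcons; case: a Hw => x b Hw; case: a' Hw' => x' b' Hw' /=.
case: b Hw; case: b' Hw' => Hw' Hw; move=> [] //.
- move=> E E'; subst r' x'; move: Hw'; rewrite reduced_rcons2.
  by rewrite /canc /= eqxx andbF.
- move=> E E'; subst r x'; move: Hw; rewrite reduced_rcons2.
  by rewrite /canc /= eqxx andbF.
- by move=> -> ->.
Qed.

Definition EV (X : finType) (x0 : X) (V : {fset seq (letter X)}) : {fset cedge X} :=
  [fset edge x0 w | w in V & w != [::]].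

Definition mkT (X : finType) (x0 : X) (V : {fset seq (letter X)}) : subgraph X :=
  (V, EV x0 V).

Lemma in_EV X x0 (V : {fset seq (letter X)}) e :
  reflect (exists2 w, (w \in V) && (w != [::]) & e = edge x0 w) (e \in EV x0 V).
Proof.
apply: (iffP idP).
  by case/imfsetP => w Hw ->; exists w.
by case=> w Hw ->; apply/imfsetP; exists w.
Qed.

Lemma step_cases X (e : cedge X) a b : joins e a b ->
  b = rmul a (e.2, false) \/ a = rmul b (e.2, false).
Proof. by case/orP => /andP[/eqP -> /eqP ->]; auto. Qed.

Lemma adj_joins X (E : {fset cedge X}) a b :
  adj E a b -> exists2 e, e \in E & joins e a b.
Proof. by case/hasP => e He J; exists e. Qed.

Lemma adj_size X (E : {fset cedge X}) a b : adj E a b -> size b <= (size a).+1.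
Proof.
case/adj_joins => e _ /step_cases [->|->].
  case: (size_rmul a (e.2, false)) => [->//|H].
  by apply: (leq_trans (leqnSn _)); rewrite H leqnSn.
case: (size_rmul b (e.2, false)) => [->|<-] //.
by rewrite -addn2 leq_addr.
Qed.

Lemma adj_up X (E : {fset cedge X}) a b : adj E a b -> size b = (size a).+1 ->
  a = parent b /\ b != [::].
Proof.
case/adj_joins => e _ /step_cases [->|->].
  case: (rmulP a (e.2, false)) => [->|[ne ->]].
    by rewrite parent_rcons; case: a.
  move=> H; exfalso; case/lastP: a ne H => [|r c] //; rewrite parent_rcons size_rcons.
  move=> _ H; lia.
case: (rmulP b (e.2, false)) => [->|[ne ->]] //.
by rewrite size_rcons => H; exfalso; lia.
Qed.

Lemma adj_cross X (E : {fset cedge X}) a b v : adj E a b ->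
  ~~ prefix v a -> prefix v b -> [/\ a = parent v, b = v & v != [::]].
Proof.
case/adj_joins => e _ /step_cases [->|->].
  case: (rmulP a (e.2, false)) => [->|[ne ->]].
    rewrite prefix_rconsE => /negPf -> /= /eqP ->.
    by rewrite parent_rcons; case: a.
  move=> /negP H1 H2; exfalso; apply: H1.
  exact: (prefix_trans H2 (prefix_take _ _)).
case: (rmulP b (e.2, false)) => [->|[ne ->]].
  move=> /negP H1 H2; exfalso; apply: H1.
  exact: (prefix_trans H2 (prefix_rcons _ _)).
case/lastP: b ne => [|r c] // _; rewrite parent_rcons prefix_rconsE.
by move=> /negPf -> /= /eqP ->; rewrite parent_rcons; case: r.
Qed.

Lemma path_cross (T : Type) (r : rel T) (f : pred T) x p :
  path r x p -> ~~ f x -> f (last x p) -> exists a b, [/\ r a b, ~~ f a & f b].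
Proof.
elim: p x => [|y p IH] x /=; first by move=> _ /negPf ->.
case/andP => rxy Hp nfx.
case: (boolP (f y)) => [fy _|nfy]; first by exists x, y.
exact: IH.
Qed.

Lemma walk_size X (E : {fset cedge X}) a p :
  path (adj E) a p -> size (last a p) <= (size a + size p)%N.
Proof.
elim: p a => [|b p IH] a /=; first by rewrite addn0.
case/andP => Hab Hp; apply: leq_trans (IH _ Hp) _.
have := adj_size Hab; move: (size a) (size b) (size p) => x y z; lia.
Qed.

Lemma walk_up X (E : {fset cedge X}) a p :
  path (adj E) a p -> size (last a p) = (size a + size p)%N ->
  prefix a (last a p) /\
  (forall x y, (x, y) \in zip (a :: p) p ->
     [/\ x = parent y, y != [::] & prefix y (last a p)]).
Proof.
elim: p a => [|b p IH] a /=; first by move=> _ _; split => //; exact: prefix_refl.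
case/andP => Hab Hp Hsz.
have Hb := adj_size Hab; have Hl := walk_size Hp.
have Hsb : size b = (size a).+1 by apply/eqP; rewrite eqn_leq Hb /=; lia.
have [Hpb Hz] := IH b Hp ltac:(lia).
have [Ea nb] := adj_up Hab Hsb.
split.
  by apply: prefix_trans Hpb; rewrite Ea prefix_take.
move=> x y; rewrite inE => /orP[/eqP [-> ->]|]; last exact: Hz.
by [].
Qed.

Lemma walk_ends X (E : {fset cedge X}) (V : {fset seq (letter X)}) a p :
  (forall e, e \in E -> (e.1 \in V) && (mulx e.1 e.2 \in V)) ->
  a \in V -> path (adj E) a p -> forall x, x \in p -> x \in V.
Proof.
move=> HE; elim: p a => [|b p IH] a //= Ha /andP[Hab Hp] x.
have Hb : b \in V.
  have [e He J] := adj_joins Hab; have /andP[h1 h2] := HE e He.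
  by have [_ [->|->]] := joins_ends J.
by rewrite inE => /orP[/eqP ->|]; [exact: Hb | exact: IH Hb Hp x].
Qed.

Lemma conn_parent X x0 (T : subgraph X) v :
  is_fin_conn_subgraph T -> v \in T.1 -> v != [::] ->
  parent v \in T.1 /\ edge x0 v \in T.2.
Proof.
case=> HV HE H0 HW Hv nv.
have [p /andP[Hp /eqP Hl]] := HW v Hv.
have [a [b [Hab na pb]]] : exists a b, [/\ adj T.2 a b, ~~ prefix v a & prefix v b].
  apply: (path_cross (f := prefix v) Hp); first by rewrite prefixs0.
  by rewrite Hl prefix_refl.
have [Ea Eb _] := adj_cross Hab na pb; subst a b.
have [e He J] := adj_joins Hab.
case/lastP: v nv Hv He J HW Hp Hl na pb Hab => [|r c] // _ Hv He J.
rewrite parent_rcons in J *.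
have Ee := joins_edgeE x0 J; subst e.
split => //.
have /andP[h1 h2] := HE _ He.
by have [[->|->] _] := joins_ends J.
Qed.

Lemma edges_eq X x0 (T : subgraph X) :
  is_fin_conn_subgraph T -> T.2 = EV x0 T.1.
Proof.
move=> C; have [HV HE H0 HW] := C.
apply/fsetP => e; apply/idP/in_EV.
  move=> He; have /andP[h1 h2] := HE e He.
  case: e He h1 h2 => h x He /= h1 h2.
  rewrite /mulx in h2.
  case: (rmulP h (x, false)) => [E|[ne E]]; rewrite E in h2.
    exists (rcons h (x, false)); first by rewrite h2; case: h {He h1 h2 E}.
    by rewrite edge_rcons.
  exists h; first by rewrite h1 ne.
  case/lastP: h ne He h1 h2 E => [|r c] // _ He h1 h2.
  rewrite rmul_rcons edge_rcons parent_rcons; case: ifP.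
    by rewrite canc_false => /andP[/eqP <- ->].
  by move=> _ /(congr1 size); rewrite !size_rcons => H; exfalso; lia.
case=> w /andP[Hw nw] ->.
by have [] := conn_parent x0 C Hw nw.
Qed.

Definition pw (X : finType) (v : seq (letter X)) : seq (seq (letter X)) :=
  [seq take i v | i <- iota 1 (size v)].

Lemma pw_rcons X (r : seq (letter X)) a : pw (rcons r a) = rcons (pw r) (rcons r a).
Proof.
rewrite /pw size_rcons -[(size r).+1]addn1 iotaD map_cat cats1 /= add1n take_oversize ?size_rcons //.
congr rcons. apply/eq_in_map => i; rewrite mem_iota => /andP[_ Hi].
by rewrite -cats1 takel_cat //; move: Hi; rewrite add1n ltnS.
Qed.

Lemma last_pw X (v : seq (letter X)) : last [::] (pw v) = v.
Proof. by case/lastP: v => [|r a] //; rewrite pw_rcons last_rcons. Qed.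

Lemma size_pw X (v : seq (letter X)) : size (pw v) = size v.
Proof. by rewrite /pw size_map size_iota. Qed.

Lemma zip_cons_rcons (T : Type) (a x : T) p :
  zip (a :: rcons p x) (rcons p x) = rcons (zip (a :: p) p) (last a p, x).
Proof. by elim: p a => [|b p IH] a //=; rewrite IH. Qed.

Lemma on_walk_rcons X (e : cedge X) p x :
  on_walk e (rcons p x) = on_walk e p || joins e (last [::] p) x.
Proof. by rewrite /on_walk zip_cons_rcons has_rcons orbC. Qed.

Definition pclosed (X : finType) (V : {fset seq (letter X)}) :=
  forall w, w \in V -> parent w \in V.
Definition allred (X : finType) (V : {fset seq (letter X)}) :=
  forall w, w \in V -> reduced w.

Lemma walk_pw X x0 (V : {fset seq (letter X)}) v :
  pclosed V -> allred V -> v \in V -> walk (EV x0 V) v (pw v).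
Proof.
move=> PC AR; rewrite /walk last_pw eqxx andbT.
elim/last_ind: v => [|r a IH] // Hv.
have Hr : r \in V by have := PC _ Hv; rewrite parent_rcons.
rewrite pw_rcons rcons_path IH // last_pw /=.
apply/hasP; exists (edge x0 (rcons r a)); last exact: joins_edge (AR _ Hv).
by apply/in_EV; exists (rcons r a) => //; rewrite Hv; case: (r).
Qed.

Lemma on_walk_pw X x0 (v : seq (letter X)) e : reduced v ->
  on_walk e (pw v) <-> exists w, [/\ prefix w v, w != [::] & e = edge x0 w].
Proof.
elim/last_ind: v => [|r a IH] Hv.
  split => //; by case=> w [Hp ne _]; move: Hp ne; case: w.
have Hr := reduced_rconsW Hv.
rewrite pw_rcons on_walk_rcons last_pw; split.
  case/orP => [H|/(joins_edgeE x0) ->].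
    have [w [Hp ne ->]] := (IH Hr).1 H.
    by exists w; split => //; rewrite prefix_rconsE Hp.
  by exists (rcons r a); split => //; [exact: prefix_refl | case: (r)].
case=> w [Hp ne Ee]; move: Hp; rewrite prefix_rconsE => /orP[Hp|/eqP Ew].
  apply/orP; left; apply: (proj2 (IH Hr)); by exists w.
by apply/orP; right; rewrite Ee Ew; apply: joins_edge.
Qed.

Lemma mkT_conn X x0 (V : {fset seq (letter X)}) :
  allred V -> [::] \in V -> pclosed V -> is_fin_conn_subgraph (mkT x0 V).
Proof.
move=> AR H0 PC; split => //=.
- move=> e /in_EV [w /andP[Hw nw] ->].
  case/lastP: w Hw nw => [|r a] // Hw _.
  have Hr : r \in V by have := PC _ Hw; rewrite parent_rcons.
  by case: (edge_ends x0 (AR _ Hw)) => [[-> ->]|[-> ->]]; rewrite ?Hr ?Hw.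
- by move=> v Hv; exists (pw v); apply: walk_pw.
Qed.

Lemma trunkP X x0 (V : {fset seq (letter X)}) g e :
  allred V -> pclosed V -> g \in V ->
  trunk_edge (mkT x0 V) g e <-> exists w, [/\ prefix w g, w != [::] & e = edge x0 w].
Proof.
move=> AR PC Hg; have Rg := AR _ Hg; split.
  case=> p [[Hw Hmin] Ho]; have /andP[Hp /eqP Hl] := Hw.
  have H1 := Hmin _ (walk_pw x0 PC AR Hg); rewrite size_pw in H1.
  have H2 := walk_size Hp; rewrite Hl /= in H2.
  have [_ Hz] := walk_up Hp ltac:(rewrite Hl /=; lia).
  case/hasP: Ho => [[x y] Hxy /= J].
  have [Ex ny Py] := Hz x y Hxy; rewrite Hl in Py.
  case/lastP: y ny Hxy J Ex Py => [|r c] // ny Hxy J Ex Py.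
  rewrite parent_rcons in Ex; subst x.
  by exists (rcons r c); split => //; apply: joins_edgeE.
move=> H; exists (pw g); split; last exact/(on_walk_pw x0 e Rg).
split; first exact: walk_pw.
move=> p' /andP[Hp /eqP Hl]; have := walk_size Hp.
by rewrite Hl size_pw.
Qed.

Lemma mem_pw X (g w : seq (letter X)) : (w \in pw g) = prefix w g && (w != [::]).
Proof.
apply/mapP/andP => [[i]|[Hp ne]].
  rewrite mem_iota add1n ltnS => /andP[i1 ig] ->; split; first exact: prefix_take.
  by apply/negP => /eqP /(congr1 size); rewrite size_takel //= => E; rewrite E in i1.
exists (size w); last by move: Hp; rewrite prefixE => /eqP.
rewrite mem_iota add1n ltnS size_prefix // andbT lt0n size_eq0 //.
Qed.

Lemma uniq_pw X (g : seq (letter X)) : uniq (pw g).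
Proof.
rewrite /pw map_inj_in_uniq ?iota_uniq // => i j.
rewrite !mem_iota !add1n !ltnS => /andP[_ Hi] /andP[_ Hj] E.
by have := congr1 size E; rewrite !size_takel.
Qed.

Definition tseq (X : finType) (g : seq (letter X)) := [::] :: pw g.

Lemma mem_tseq X (g w : seq (letter X)) : (w \in tseq g) = prefix w g.
Proof.
rewrite inE mem_pw; case: (eqVneq w [::]) => [->|] /=; last by rewrite andbT.
by rewrite prefix0s.
Qed.

Lemma uniq_tseq X (g : seq (letter X)) : uniq (tseq g).
Proof. by rewrite /= uniq_pw andbT mem_pw eqxx andbF. Qed.

Lemma uniq_children X (u : seq (letter X)) : uniq (children u).
Proof.
rewrite /children map_inj_uniq; last exact: rcons_injr.
by rewrite filter_uniq // enum_uniq.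
Qed.

Lemma uniq_flat X (s : seq (seq (letter X))) :
  uniq s -> uniq (flatten (map (@children X) s)).
Proof.
elim: s => [|u s IH] //= /andP[nu us].
rewrite cat_uniq uniq_children IH // andbT.
apply/hasPn => c /flatten_mapP [y ys]; rewrite mem_children => /and3P[_ _ /eqP Py].
apply/negP; rewrite mem_children => /and3P[_ _ /eqP Pu].
by move: nu; rewrite -Pu Py ys.
Qed.

Definition L0 (X : finType) (g : seq (letter X)) :=
  [seq c <- flatten (map (@children X) (tseq g)) | ~~ prefix c g].

Lemma mem_flat X (g c : seq (letter X)) :
  (c \in flatten (map (@children X) (tseq g))) =
  [&& c != [::], reduced c & prefix (parent c) g].
Proof.
apply/flatten_mapP/idP => [[u]|].
  rewrite mem_tseq mem_children => Hu /and3P[ne red /eqP Pc].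
  by rewrite ne red Pc.
move=> /and3P[ne red Hp]; exists (parent c); first by rewrite mem_tseq.
by rewrite mem_children ne red eqxx.
Qed.

Lemma mem_L0 X (g c : seq (letter X)) :
  (c \in L0 g) = [&& c != [::], reduced c, prefix (parent c) g & ~~ prefix c g].
Proof.
rewrite mem_filter mem_flat.
by case: (c != [::]); case: (reduced c); case: (prefix (parent c) g); case: (prefix c g).
Qed.

Lemma Inv1_L0 X (g : seq (letter X)) : Inv1 (L0 g).
Proof. by move=> c; rewrite mem_L0 => /and4P[-> -> _ _]. Qed.

Lemma Inv2_L0 X (g : seq (letter X)) : Inv2 (L0 g).
Proof.
split; first by rewrite filter_uniq // uniq_flat // uniq_tseq.
move=> a b; rewrite !mem_L0 => /and4P[na ra pa npa] /and4P[nb rb pb npb] Hab.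
case/lastP: b nb rb pb npb Hab => [|r c] // _ _; rewrite parent_rcons => pr _.
rewrite prefix_rconsE => /orP[H|/eqP //].
by rewrite (prefix_trans H pr) in npa.
Qed.

Lemma prefix_reduced X (w g : seq (letter X)) : reduced g -> prefix w g -> reduced w.
Proof. by move=> Hg; rewrite prefixE => /eqP <-; apply: reduced_take. Qed.

Lemma size_children_nil X : size (children ([::] : seq (letter X))) = #|{: letter X}|.
Proof. by rewrite size_map size_filter count_predT cardT. Qed.

Lemma map_constE (T : eqType) (U : Type) (f : T -> U) (c : U) (s : seq T) :
  (forall w, w \in s -> f w = c) -> map f s = nseq (size s) c.
Proof.
elim: s => [|a s IH] H //=; rewrite H ?mem_head // IH // => w Hw.
by apply: H; rewrite inE Hw orbT.
Qed.

Lemma size_L0 X (g : seq (letter X)) : reduced g ->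
  size (L0 g) = (#|{: letter X}| + size g * #|{: letter X}|.-1 - size g)%N.
Proof.
move=> Rg.
have HF : size (flatten (map (@children X) (tseq g))) =
          (#|{: letter X}| + size g * #|{: letter X}|.-1)%N.
  rewrite size_flatten /shape -map_comp /= size_children_nil; congr addn.
  have -> : [seq (size \o (@children X)) i | i <- pw g] = nseq (size g) #|{: letter X}|.-1.
    rewrite -(size_pw g); apply: map_constE => w; rewrite mem_pw => /andP[Hp ne].
    by rewrite /= size_children // (prefix_reduced Rg Hp).
  by rewrite sumn_nseq mulnC.
have HT : count ((fun c : seq (letter X) => prefix c g)) (flatten (map (@children X) (tseq g))) = size g.
  rewrite -size_filter -(size_pw g); apply: perm_size; apply: uniq_perm.
  - by rewrite filter_uniq // uniq_flat // uniq_tseq.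
  - exact: uniq_pw.
  move=> c; rewrite mem_filter mem_pw andbC; apply/andP/andP => [[Hp Hc]|[Hp ne]].
    by split => //; move: Hp; rewrite mem_flat => /and3P[].
  split => //; rewrite mem_flat ne (prefix_reduced Rg Hp) /=.
  exact: (prefix_trans (prefix_take _ _) Hp).
rewrite /L0 size_filter.
have := count_predC ((fun c : seq (letter X) => prefix c g)) (flatten (map (@children X) (tseq g))).
rewrite HF HT => <-; by rewrite addKn.
Qed.

Lemma pclosed_prefix X (V : {fset seq (letter X)}) v w :
  pclosed V -> v \in V -> prefix w v -> w \in V.
Proof.
move=> PC; elim/last_ind: v w => [|r a IH] w Hv.
  by rewrite prefixs0 => /eqP ->.
rewrite prefix_rconsE => /orP[Hp|/eqP -> //].
by apply: IH Hp; have := PC _ Hv; rewrite parent_rcons.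
Qed.

Lemma branch_card X x0 (V : {fset seq (letter X)}) g k :
  allred V -> pclosed V -> g \in V ->
  n_branch_edges (mkT x0 V) g k <-> #|` [fset w in V | ~~ prefix w g]| = k.
Proof.
move=> AR PC Hg; have Rg := AR _ Hg.
set S := [fset w in V | ~~ prefix w g].
have memS : forall w, (w \in S) = (w \in V) && ~~ prefix w g by move=> w; rewrite !inE.
have claim : forall e, e \in edge x0 @` S <-> (e \in (mkT x0 V).2 /\ ~ trunk_edge (mkT x0 V) g e).
  move=> e; split.
    case/imfsetP => w /= Hw ->; move: Hw; rewrite memS => /andP[Hw npw].
    have nw : w != [::] by apply/negP => /eqP E; rewrite E prefix0s in npw.
    split; first by apply/in_EV; exists w => //; rewrite Hw nw.
    move=> Ht; have [w' [Hp nw' E]] := (trunkP x0 (edge x0 w) AR PC Hg).1 Ht.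
    have E' := edge_inj nw nw' (AR _ Hw) (prefix_reduced Rg Hp) E.
    by rewrite E' Hp in npw.
  case=> /in_EV [w /andP[Hw nw] ->] nt; apply/imfsetP; exists w => //.
  rewrite /= memS Hw /=; apply/negP => Hp; apply: nt.
  by apply: (proj2 (trunkP x0 (edge x0 w) AR PC Hg)); exists w.
have cB : #|` edge x0 @` S| = #|` S|.
  apply/eqP/card_in_imfsetP => a b; rewrite !memS => /andP[Ha na] /andP[Hb nb].
  apply: edge_inj; rewrite ?AR //.
    by apply/negP => /eqP E; rewrite E prefix0s in na.
  by apply/negP => /eqP E; rewrite E prefix0s in nb.
split.
  case=> B [cardB HB]; rewrite -cB -cardB; congr (#|` _|).
  apply/fsetP => e; apply/idP/idP => H.
    exact: (proj2 (HB e)) ((proj1 (claim e)) H).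
  exact: (proj2 (claim e)) ((proj1 (HB e)) H).
by move=> cS; exists (edge x0 @` S); split; [rewrite cB | move=> e; exact: claim e].
Qed.

Lemma T_eq (X : finType) (x0 : X) (T : subgraph X) : is_fin_conn_subgraph T -> T = mkT x0 T.1.
Proof. by move=> C; rewrite /mkT -(edges_eq x0 C); case: T C. Qed.

Lemma conn_pclosed (X : finType) (x0 : X) (T : subgraph X) : is_fin_conn_subgraph T -> pclosed T.1.
Proof.
move=> C w Hw; case: (eqVneq w [::]) => [E|nw]; first by rewrite E parent_nil -E.
by have [] := conn_parent x0 C Hw nw.
Qed.

Lemma forest_nopref X (g : seq (letter X)) S w :
  forest (L0 g) S -> w \in S -> ~~ prefix w g.
Proof.
move=> F Hw; have [v Hv Hp] := forest_pref F Hw.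
apply/negP => Hwg; move: Hv; rewrite mem_L0 => /and4P[_ _ _ /negP]; apply.
exact: prefix_trans Hp Hwg.
Qed.

Lemma V_props X (g : seq (letter X)) S : reduced g -> forest (L0 g) S ->
  let V := toF (tseq g) `|` S in
  [/\ allred V, pclosed V, [::] \in V, g \in V & [fset w in V | ~~ prefix w g] = S].
Proof.
move=> Rg F V.
have memV : forall w, (w \in V) = prefix w g || (w \in S).
  by move=> w; rewrite in_fsetU mem_toF mem_tseq.
split.
- move=> w; rewrite memV => /orP[Hp|Hw]; first exact: prefix_reduced Rg Hp.
  by have [] := F w Hw.
- move=> w; rewrite !memV => /orP[Hp|Hw].
    by rewrite (prefix_trans (prefix_take _ _) Hp).
  have [_ _ /orP[HL|HP]] := F w Hw; last by rewrite HP orbT.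
  by move: HL; rewrite mem_L0 => /and4P[_ _ -> _].
- by rewrite memV prefix0s.
- by rewrite memV prefix_refl.
apply/fsetP => w.
have -> : (w \in [fset w0 in V | ~~ prefix w0 g]) = (w \in V) && ~~ prefix w g.
  by rewrite !inE.
rewrite memV.
case: (boolP (w \in S)) => [Hw|_]; first by rewrite (forest_nopref F Hw) orbT.
by case: (prefix w g).
Qed.

Unset Implicit Arguments.

Theorem mainTheorem3 (X : finType) (X_nonempty : 0 < #|X|)
  (t k : nat) (g : seq (letter X)) (g_red : reduced g) (g_len : size g = t)
  (p q : nat) (hp : p = (2 * #|X|).-1)
  (hq : (q%:Z = 2%:Z * p%:Z + (t%:Z - 1) * (p%:Z - 1))%R) :
  exists s : seq (subgraph X),
    uniq s /\
    (forall T : subgraph X, T \in s <-> (munn_elt T g /\ n_branch_edges T g k)) /\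
    ((size s)%:R = fuss_catalan p q k)%R.
Proof.
have [x0 _] : exists x0 : X, x0 \in X by apply/card_gt0P.
set tV := toF (tseq g).
pose f := fun S : {fset seq (letter X)} => mkT x0 (tV `|` S).
have HS : forall S, S \in map (@toF X) (enumF k (L0 g)) ->
    forest (L0 g) S /\ #|` S| = k.
  move=> S /mapP [s0 Hs0 ->]; have [F Sz] := enumF_sound (@Inv1_L0 X g) Hs0.
  split => //; rewrite /toF card_fseq undup_id // ?Sz //.
  exact: enumF_uniq (@Inv2_L0 X g) Hs0.
exists (map f (map (@toF X) (enumF k (L0 g)))).
split.
  rewrite map_inj_in_uniq; first exact: enumF_uniqF (@Inv2_L0 X g).
  move=> S1 S2 H1 H2 E.
  have [F1 _] := HS _ H1; have [F2 _] := HS _ H2.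
  have [_ _ _ _ E1] := V_props g_red F1.
  have [_ _ _ _ E2] := V_props g_red F2.
  by rewrite -E1 -E2; move: E; rewrite /f /mkT => -[->].
split.
  move=> T; split.
    case/mapP => S HS' ->; have [F cS] := HS _ HS'.
    have [AR PC H0 Hg E] := V_props g_red F.
    split; first by split => //; apply: mkT_conn.
    by apply/(branch_card x0 _ AR PC Hg); rewrite E.
  case=> [[C Hg] Hb].
  have AR : allred T.1 by case: C.
  have PC := conn_pclosed x0 C.
  have ET := T_eq x0 C.
  rewrite ET in Hb; have cS := (branch_card x0 _ AR PC Hg).1 Hb.
  set S := [fset w in T.1 | ~~ prefix w g] in cS.
  have memS : forall w, (w \in S) = (w \in T.1) && ~~ prefix w g by move=> w; rewrite !inE.
  have F : forest (L0 g) S.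
    move=> w; rewrite memS => /andP[Hw npw].
    have nw : w != [::] by apply/negP => /eqP E; rewrite E prefix0s in npw.
    split => //; first exact: AR.
    case: (boolP (prefix (parent w) g)) => Hp.
      by rewrite mem_L0 nw AR //= Hp npw.
    by rewrite memS PC // Hp orbT.
  have [s0 Hs0 Es0] := enumF_complete F cS.
  apply/mapP; exists S; first by apply/mapP; exists s0.
  rewrite ET /f; congr mkT; apply/fsetP => w.
  rewrite in_fsetU mem_toF mem_tseq memS.
  case: (boolP (prefix w g)) => Hp /=; last by rewrite andbT.
  by rewrite (pclosed_prefix PC Hg Hp).
rewrite !size_map size_enumF; last exact: Inv1_L0.
have NX : #|{: letter X}| = (#|X| * 2)%N by rewrite card_prod card_bool.
have Pp : #|{: letter X}|.-1 = p by rewrite NX hp mulnC.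
have Lq : size (L0 g) = q.
  rewrite size_L0 // NX g_len.
  move: X_nonempty hp hq; move: #|X| => n; clear; move=> Hn Hp Hq; nia.
rewrite Pp Lq Fn_fuss //.
  rewrite hp; move: X_nonempty; clear; move: #|X| => n Hn; lia.
apply/orP; left; rewrite -Lq size_L0 // NX.
move: X_nonempty; clear; move: #|X| (size g) => n m Hn; nia.
Qed.
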